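(* Let $\Lambda$ be a row-finite $k$-graph with no sources and $R$ a commutative ring with $1$. The cycline subalgebra $\mathcal{M}$ of ${\rm KP}_R(\Lambda)$ is commutative.
   Context: A $k$-graph is a countable category $\Lambda$ (vertices $\Lambda^0$, paths, maps $r,s$) with a degree functor $d:\Lambda\to\mathbb{N}^k$ satisfying unique factorization: if $d(\lambda)=m+n$ there are unique $\mu,\nu$ with $s(\mu)=r(\nu)$, $d(\mu)=m,d(\nu)=n$, $\lambda=\mu\nu$. $v\Lambda=\{\lambda: r(\lambda)=v\}$, $v\Lambda^n$ those of degree $n$; row-finite with no sources means each $v\Lambda^n$ is finite and nonempty. ${\rm KP}_R(\Lambda)$ is the universal $R$-algebra generated by $p_v$ ($v\in\Lambda^0$), $s_\lambda,s_{\lambda^*}$ ($d(\lambda)\ne0$) with relations (KP1) $p_v$ mutually orthogonal idempotents; (KP2) $s_\lambda s_\mu=s_{\lambda\mu}$, $s_{\mu^*}s_{\lambda^*}=s_{(\lambda\mu)^*}$, $p_{r(\lambda)}s_\lambda=s_\lambda=s_\lambda p_{s(\lambda)}$, $p_{s(\lambda)}s_{\lambda^*}=s_{\lambda^*}=s_{\lambda^*}p_{r(\lambda)}$ when $r(\mu)=s(\lambda)$; (KP3) $s_{\lambda^*}s_\mu=\delta_{\lambda,\mu}p_{s(\lambda)}$ when $d(\lambda)=d(\mu)$; (KP4) $p_v=\sum_{\lambda\in v\Lambda^n}s_\lambda s_{\lambda^*}$ for $n\ne0$. Convention $s_v=s_{v^*}=p_v$. A pair $(\alpha,\beta)\in\Lambda\times\Lambda$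 with $s(\alpha)=s(\beta)$ is a cycline pair if $s_{\alpha\gamma}s_{(\alpha\gamma)^*}=s_{\beta\gamma}s_{(\beta\gamma)^*}$ for all $\gamma\in s(\alpha)\Lambda$. The cycline subalgebra $\mathcal{M}$ is the $R$-subalgebra of ${\rm KP}_R(\Lambda)$ generated by $\{s_\alpha s_{\beta^*}: (\alpha,\beta)\text{ cycline}\}$. *)

(* Defs.v *)
From HB Require Import structures.
From mathcomp Require Import all_boot all_order all_algebra.
Set Implicit Arguments. Unset Strict Implicit. Unset Printing Implicit Defensive.
Import GRing.Theory.
Local Open Scope ring_scope.

Definition Nk (k : nat) := {ffun 'I_k -> nat}.
Definition Nk0 (k : nat) : Nk k := [ffun => 0%N].
Definition Nkadd (k : nat) (m n : Nk k) : Nk k := [ffun i => (m i + n i)%N].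

(* ---------- k-graphs ----------
   A k-graph is a countable category (objects = vertices, morphisms = paths,
   range r = codomain, source s = domain, composition lam mu defined when
   s lam = r mu) with a degree functor d into N^k satisfying unique
   factorisation. *)
Record kgraph (k : nat) := KGraph {
  kvert : countType;
  kpath : countType;
  kr : kpath -> kvert;
  ks : kpath -> kvert;
  kid : kvert -> kpath;
  kcomp : kpath -> kpath -> kpath;      (* kcomp lam mu = lam mu, meaningful if ks lam = kr mu *)
  kdeg : kpath -> Nk k;
  kr_id : forall v, kr (kid v) = v;
  ks_id : forall v, ks (kid v) = v;
  kcomp_idl : forall l, kcomp (kid (kr l)) l = l;
  kcomp_idr : forall l, kcomp l (kid (ks l)) = l;
  kr_comp : forall l m, ks l = kr m -> kr (kcomp l m) = kr l;
  ks_comp : forall l m, ks l = kr m -> ks (kcomp l m) = ks m;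
  kcompA : forall l m n, ks l = kr m -> ks m = kr n ->
     kcomp l (kcomp m n) = kcomp (kcomp l m) n;
  kdeg_id : forall v, kdeg (kid v) = Nk0 k;
  kdeg_comp : forall l m, ks l = kr m -> kdeg (kcomp l m) = Nkadd (kdeg l) (kdeg m);
  kfact_ex : forall l (m n : Nk k), kdeg l = Nkadd m n ->
     exists mu nu, [/\ ks mu = kr nu, kdeg mu = m, kdeg nu = n & l = kcomp mu nu];
  kfact_uniq : forall l (m n : Nk k) mu nu mu' nu', kdeg l = Nkadd m n ->
     ks mu = kr nu -> kdeg mu = m -> kdeg nu = n -> l = kcomp mu nu ->
     ks mu' = kr nu' -> kdeg mu' = m -> kdeg nu' = n -> l = kcomp mu' nu' ->
     mu = mu' /\ nu = nu'
}.

Definition row_finite_no_sources (k : nat) (G : kgraph k) : Prop :=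
  forall (v : kvert G) (n : Nk k),
    (exists l : seq (kpath G), forall lam, lam \in l <-> (kr lam = v /\ kdeg lam = n))
    /\ (exists lam, kr lam = v /\ kdeg lam = n).

(* ---------- (possibly non-unital) associative R-algebras ----------
   Kumjian-Pask algebras of graphs with infinitely many vertices are not
   unital, so an R-algebra is an R-module with an associative R-bilinear
   multiplication. *)
Record nualg_axioms (R : comPzRingType) (A : lmodType R) (mul : A -> A -> A) : Prop := {
  nua_mulA : forall x y z, mul x (mul y z) = mul (mul x y) z;
  nua_mulDl : forall x y z, mul (x + y) z = mul x z + mul y z;
  nua_mulDr : forall x y z, mul x (y + z) = mul x y + mul x z;
  nua_scalel : forall (a : R) x y, mul (a *: x) y = a *: mul x y;
  nua_scaler : forall (a : R) x y, mul x (a *: y) = a *: mul x y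
}.

(* ---------- Kumjian-Pask families ----------
   p v = p_v, s lam = s_lam, ss lam = s_{lam^*}; the convention
   s_v = s_{v^*} = p_v is built in for the identity paths. *)
Record KP_family (R : comPzRingType) (k : nat) (G : kgraph k) (A : lmodType R)
    (mul : A -> A -> A) (p : kvert G -> A) (s ss : kpath G -> A) : Prop := {
  kp_conv_s : forall v, s (kid v) = p v;
  kp_conv_ss : forall v, ss (kid v) = p v;
  kp1_idem : forall v, mul (p v) (p v) = p v;
  kp1_orth : forall v w, v <> w -> mul (p v) (p w) = 0;
  kp2_s : forall l m, kr m = ks l -> mul (s l) (s m) = s (kcomp l m);
  kp2_ss : forall l m, kr m = ks l -> mul (ss m) (ss l) = ss (kcomp l m);
  kp2_rs : forall l, mul (p (kr l)) (s l) = s l;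
  kp2_sr : forall l, mul (s l) (p (ks l)) = s l;
  kp2_sss : forall l, mul (p (ks l)) (ss l) = ss l;
  kp2_ssr : forall l, mul (ss l) (p (kr l)) = ss l;
  kp3_eq : forall l, mul (ss l) (s l) = p (ks l);
  kp3_neq : forall l m, kdeg l = kdeg m -> l <> m -> mul (ss l) (s m) = 0;
  kp4 : forall (v : kvert G) (n : Nk k) (l : seq (kpath G)), n <> Nk0 k ->
     uniq l -> (forall lam, lam \in l <-> (kr lam = v /\ kdeg lam = n)) ->
     p v = \sum_(lam <- l) mul (s lam) (ss lam)
}.

(* ---------- The Kumjian-Pask algebra KP_R(Lambda) ----------
   characterised (up to isomorphism) by its universal property: every
   Kumjian-Pask family in an R-algebra B factors through a unique R-algebra
   homomorphism. *)
Definition KP_universal (R : comPzRingType) (k : nat) (G : kgraph k) (A : lmodType R)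
    (mul : A -> A -> A) (p : kvert G -> A) (s ss : kpath G -> A) : Prop :=
  nualg_axioms mul /\ KP_family mul p s ss /\
  forall (B : lmodType R) (mulB : B -> B -> B) (pB : kvert G -> B) (sB ssB : kpath G -> B),
    nualg_axioms mulB -> KP_family mulB pB sB ssB ->
    exists f : A -> B,
      ((forall x y, f (x + y) = f x + f y) /\
       (forall (a : R) x, f (a *: x) = a *: f x) /\
       (forall x y, f (mul x y) = mulB (f x) (f y)) /\
       (forall v, f (p v) = pB v) /\
       (forall l, f (s l) = sB l) /\
       (forall l, f (ss l) = ssB l)) /\
      forall g : A -> B,
        (forall x y, g (x + y) = g x + g y) ->
        (forall (a : R) x, g (a *: x) = a *: g x) ->
        (forall x y, g (mul x y) = mulB (g x) (g y)) ->
        (forall v, g (p v) = pB v) ->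
        (forall l, g (s l) = sB l) ->
        (forall l, g (ss l) = ssB l) ->
        forall x, g x = f x.

Definition cycline_pair (R : comPzRingType) (k : nat) (G : kgraph k) (A : lmodType R)
    (mul : A -> A -> A) (s ss : kpath G -> A) (al be : kpath G) : Prop :=
  ks al = ks be /\
  forall ga, kr ga = ks al ->
    mul (s (kcomp al ga)) (ss (kcomp al ga)) = mul (s (kcomp be ga)) (ss (kcomp be ga)).

Definition in_gen_subalg (R : comPzRingType) (A : lmodType R) (mul : A -> A -> A)
    (S : A -> Prop) (x : A) : Prop :=
  forall P : A -> Prop,
    (forall y, S y -> P y) -> P 0 ->
    (forall y z, P y -> P z -> P (y + z)) ->
    (forall (a : R) y, P y -> P (a *: y)) ->
    (forall y z, P y -> P z -> P (mul y z)) ->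
    P x.

Definition cycline_subalg (R : comPzRingType) (k : nat) (G : kgraph k) (A : lmodType R)
    (mul : A -> A -> A) (s ss : kpath G -> A) : A -> Prop :=
  in_gen_subalg mul (fun x => exists al be, cycline_pair mul s ss al be /\ x = mul (s al) (ss be)).

(* Main.v *)
Require Import Defs.
From HB Require Import structures.
From mathcomp Require Import all_boot all_order all_algebra.
From mathcomp Require Import zify.
Set Implicit Arguments. Unset Strict Implicit. Unset Printing Implicit Defensive.
Import GRing.Theory.
Local Open Scope ring_scope.

Section KP.
Variables (R : comPzRingType) (k : nat) (G : kgraph k) (A : lmodType R)
  (mul : A -> A -> A) (p : kvert G -> A) (s ss : kpath G -> A).
Hypothesis Halg : nualg_axioms mul.
Hypothesis Hkp : KP_family mul p s ss.

Local Notation "x ** y" := (mul x y) (at level 40, left associativity).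
Local Notation D := (@kdeg k G).
Local Notation e x := (mul (s x) (ss x)).

Lemma mA x y z : x ** (y ** z) = x ** y ** z. Proof. exact: (nua_mulA Halg x y z). Qed.
Lemma mul0x y : 0 ** y = 0.
Proof.
have := nua_mulDl Halg 0 0 y; rewrite addr0 => /(congr1 (fun t => t - 0 ** y)).
by rewrite subrr addrK => /esym.
Qed.
Lemma mulx0 y : y ** 0 = 0.
Proof.
have := nua_mulDr Halg y 0 0; rewrite addr0 => /(congr1 (fun t => t - y ** 0)).
by rewrite subrr addrK => /esym.
Qed.

Lemma ssK x : ss x ** e x = ss x.
Proof. by rewrite mA (kp3_eq Hkp) (kp2_sss Hkp). Qed.

Lemma zeroL x : e x = 0 -> ss x = 0.
Proof. by move=> H; rewrite -ssK H mulx0. Qed.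

Lemma eqL x y : e x = e y -> D x = D y -> ss x = ss y.
Proof.
move=> He Hd; case: (eqVneq x y) => [->//|Hxy].
have Hx : ss x = 0.
  by rewrite -ssK He mA (kp3_neq Hkp Hd) ?mul0x //; apply/eqP.
have Hy : ss y = 0.
  by rewrite -ssK -He mA (kp3_neq Hkp (esym Hd)) ?mul0x //; apply/eqP; rewrite eq_sym.
by rewrite Hx Hy.
Qed.

Lemma mismatch x x1 x2 y y1 y2 : ks x1 = kr x2 -> ks y1 = kr y2 ->
  x = kcomp x1 x2 -> y = kcomp y1 y2 -> D x1 = D y1 -> x1 <> y1 ->
  e x = e y -> e x = 0.
Proof.
move=> Cx Cy Ex Ey Dxy Nxy He.
have ex : e x = s x1 ** e x2 ** ss x1.
  by rewrite Ex -(kp2_s Hkp (esym Cx)) -(kp2_ss Hkp (esym Cx)) !mA.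
have ex2 : e x2 = ss x1 ** e x ** s x1.
  rewrite ex !mA (kp3_eq Hkp) Cx (kp2_rs Hkp) -!mA (kp3_eq Hkp) Cx.
  by rewrite (kp2_ssr Hkp).
have ey : ss x1 ** e y = 0.
  by rewrite Ey -(kp2_s Hkp (esym Cy)) !mA (kp3_neq Hkp Dxy Nxy) !mul0x.
have e2 : e x2 = 0 by rewrite ex2 He ey mul0x.
by rewrite ex e2 mulx0 mul0x.
Qed.

Lemma factor (l : kpath G) (m : Nk k) : (forall i, m i <= D l i)%N ->
  exists mu nu, [/\ ks mu = kr nu, D mu = m, D nu = [ffun i => D l i - m i]%N
    & l = kcomp mu nu].
Proof.
move=> H; apply: kfact_ex; apply/ffunP => i; rewrite /Nkadd !ffunE.
by rewrite subnKC.
Qed.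

Lemma degc l m i : ks l = kr m -> D (kcomp l m) i = (D l i + D m i)%N.
Proof. by move=> H; rewrite kdeg_comp // /Nkadd ffunE. Qed.

Lemma applyL al be x a' x1 : cycline_pair mul s ss al be ->
  ks a' = kr x1 -> x = kcomp a' x1 -> D a' = D al ->
  ss x ** (s al ** ss be) = if a' == al then ss (kcomp be x1) else 0.
Proof.
move=> [Sab _] C E Da.
rewrite E -(kp2_ss Hkp (esym C)) -!mA (mA (ss a')).
case: eqP => [Ea|Na].
  subst a'; rewrite (kp3_eq Hkp) Sab (kp2_sss Hkp) (kp2_ss Hkp) //.
  by rewrite -C Sab.
by rewrite (kp3_neq Hkp Da Na) mul0x mulx0.
Qed.

Lemma keyL al be mu nu lam : cycline_pair mul s ss al be -> cycline_pair mul s ss mu nu ->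
  D lam = [ffun i => D al i + D be i + D mu i + D nu i]%N ->
  ss lam ** (s al ** ss be ** (s mu ** ss nu)) = ss lam ** (s mu ** ss nu ** (s al ** ss be)).
Proof.
move=> Cab Cmn HL.
have [Sab Cab'] := Cab; have [Smn Cmn'] := Cmn.
have [a' [l1 [Ca1 Da1 Dl1 E1]]] : exists mu0 nu0, [/\ ks mu0 = kr nu0, D mu0 = D al,
    D nu0 = [ffun i => D lam i - D al i]%N & lam = kcomp mu0 nu0].
  by apply: factor => i; rewrite HL ffunE; move: (D al i) (D be i) (D mu i) (D nu i) => ? ? ? ?; lia.
have [m' [l3 [Cm3 Dm3 Dl3 E3]]] : exists mu0 nu0, [/\ ks mu0 = kr nu0, D mu0 = D mu,
    D nu0 = [ffun i => D lam i - D mu i]%N & lam = kcomp mu0 nu0].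
  by apply: factor => i; rewrite HL ffunE; move: (D al i) (D be i) (D mu i) (D nu i) => ? ? ? ?; lia.
rewrite [LHS](mA (ss lam)) [RHS](mA (ss lam)).
rewrite (applyL Cab Ca1 E1 Da1) (applyL Cmn Cm3 E3 Dm3).
have fac1 : a' = al -> exists mu0 nu0, [/\ ks mu0 = kr nu0, D mu0 = D mu,
    D nu0 = [ffun i => D (kcomp be l1) i - D mu i]%N & kcomp be l1 = kcomp mu0 nu0].
  move=> Ea; apply: factor => i; rewrite degc; last by rewrite -Sab -Ea.
  rewrite Dl1 HL !ffunE; move: (D al i) (D be i) (D mu i) (D nu i) => ? ? ? ?; lia.
have fac3 : m' = mu -> exists mu0 nu0, [/\ ks mu0 = kr nu0, D mu0 = D al,
    D nu0 = [ffun i => D (kcomp nu l3) i - D al i]%N & kcomp nu l3 = kcomp mu0 nu0].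
  move=> Em; apply: factor => i; rewrite degc; last by rewrite -Smn -Em.
  rewrite Dl3 HL !ffunE; move: (D al i) (D be i) (D mu i) (D nu i) => ? ? ? ?; lia.
have EL1 : a' = al -> e lam = e (kcomp be l1).
  by move=> Ea; rewrite E1 Ea; apply: Cab'; rewrite -Ca1 Ea.
have EL3 : m' = mu -> e lam = e (kcomp nu l3).
  by move=> Em; rewrite E3 Em; apply: Cmn'; rewrite -Cm3 Em.
case: (a' =P al) => [Ea|Na]; case: (m' =P mu) => [Em|Nm].
- have [m'' [l2 [Cm2 Dm2 Dl2 E2]]] := fac1 Ea.
  have [a'' [l4 [Ca4 Da4 Dl4 E4]]] := fac3 Em.
  rewrite (applyL Cmn Cm2 E2 Dm2) (applyL Cab Ca4 E4 Da4).
  have EL2 : e lam = e (kcomp m'' l2) by rewrite EL1 // E2.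
  have EL4 : e lam = e (kcomp a'' l4) by rewrite EL3 // E4.
  have EL2' : m'' = mu -> e lam = e (kcomp nu l2).
    by move=> Em2; rewrite EL2 Em2; apply: Cmn'; rewrite -Cm2 Em2.
  have EL4' : a'' = al -> e lam = e (kcomp be l4).
    by move=> Ea4; rewrite EL4 Ea4; apply: Cab'; rewrite -Ca4 Ea4.
  case: (m'' =P mu) => [Em2|Nm2]; case: (a'' =P al) => [Ea4|Na4] //.
  + apply: eqL; first by rewrite -EL2' // -EL4'.
    apply/ffunP => i; rewrite degc; last by rewrite -Smn -Em2.
    rewrite degc; last by rewrite -Sab -Ea4.
    rewrite Dl2 Dl4 !ffunE degc; last by rewrite -Sab -Ea.
    rewrite degc; last by rewrite -Smn -Em.
    rewrite Dl1 Dl3 HL !ffunE.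
    move: (D al i) (D be i) (D mu i) (D nu i) => ? ? ? ?; lia.
  + apply: zeroL; rewrite -EL2' //.
    apply: (mismatch Ca1 Ca4 E1 (erefl _) _ _ EL4); first by rewrite Da1 Da4.
    by move=> H; apply: Na4; rewrite -H.
  + apply/esym/zeroL; rewrite -EL4' //.
    apply: (mismatch Cm3 Cm2 E3 (erefl _) _ _ EL2); first by rewrite Dm3 Dm2.
    by move=> H; apply: Nm2; rewrite -H.
- rewrite mul0x.
  have [m'' [l2 [Cm2 Dm2 Dl2 E2]]] := fac1 Ea.
  rewrite (applyL Cmn Cm2 E2 Dm2).
  case: (m'' =P mu) => [Em2|Nm2] //.
  have EL2 : e lam = e (kcomp m'' l2) by rewrite EL1 // E2.
  apply: zeroL; rewrite -(Cmn' l2); last by rewrite -Cm2 Em2.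
  rewrite -Em2.
  rewrite -Em2 in Nm.
  rewrite -EL2; apply: (mismatch Cm3 Cm2 E3 (erefl _)) => //; by rewrite Dm3 Dm2.
- rewrite mul0x.
  have [a'' [l4 [Ca4 Da4 Dl4 E4]]] := fac3 Em.
  rewrite (applyL Cab Ca4 E4 Da4).
  case: (a'' =P al) => [Ea4|Na4] //.
  have EL4 : e lam = e (kcomp a'' l4) by rewrite EL3 // E4.
  apply/esym/zeroL; rewrite -(Cab' l4); last by rewrite -Ca4 Ea4.
  rewrite -Ea4.
  rewrite -Ea4 in Na.
  rewrite -EL4; apply: (mismatch Ca1 Ca4 E1 (erefl _)) => //; by rewrite Da1 Da4.
- by rewrite !mul0x.
Qed.

Lemma sumL (l : seq (kpath G)) (F : kpath G -> A) y :
  (\sum_(lam <- l) F lam) ** y = \sum_(lam <- l) (F lam ** y).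
Proof.
elim: l => [|a l IH]; first by rewrite !big_nil mul0x.
by rewrite !big_cons (nua_mulDl Halg) IH.
Qed.

Hypothesis Hrf : row_finite_no_sources G.

Lemma decomp v n y z : (forall lam, kr lam = v -> D lam = n -> ss lam ** y = ss lam ** z) ->
  p v ** y = p v ** z.
Proof.
move=> H; case: (eqVneq n (Nk0 k)) => [En|Hn].
  by rewrite -(kp_conv_ss Hkp v) H ?kr_id ?kdeg_id.
have [[l0 Hl0] _] := Hrf v n.
have Hl : forall lam, lam \in undup l0 <-> (kr lam = v /\ D lam = n).
  by move=> lam; rewrite mem_undup.
have HP := kp4 Hkp (n:=n) (v:=v) (elimN eqP Hn) (undup_uniq l0) Hl.
rewrite HP !sumL; apply: eq_big_seq => lam /Hl [H1 H2].
by rewrite -!mA H.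
Qed.

Lemma gen_comm al be mu nu : cycline_pair mul s ss al be -> cycline_pair mul s ss mu nu ->
  s al ** ss be ** (s mu ** ss nu) = s mu ** ss nu ** (s al ** ss be).
Proof.
move=> Cab Cmn.
set a := s al ** ss be; set b := s mu ** ss nu.
pose L : Nk k := [ffun i => D al i + D be i + D mu i + D nu i]%N.
have K1 : forall lam, kr lam = kr al -> D lam = L -> ss lam ** (a ** b) = ss lam ** (b ** a).
  by move=> lam _ HL; apply: keyL.
have K2 : forall lam, kr lam = kr mu -> D lam = L -> ss lam ** (b ** a) = ss lam ** (a ** b).
  by move=> lam _ HL; apply/esym/keyL.
have P1 : a ** b = p (kr al) ** (a ** b) by rewrite /a !mA (kp2_rs Hkp).
have P2 : b ** a = p (kr mu) ** (b ** a) by rewrite /b !mA (kp2_rs Hkp).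
have Q1 : a ** b = p (kr al) ** (b ** a) by rewrite {1}P1; apply: decomp K1.
have Q2 : b ** a = p (kr mu) ** (a ** b) by rewrite {1}P2; apply: decomp K2.
case: (eqVneq (kr al) (kr mu)) => [E|N].
  by rewrite Q1 E -P2.
have Z : a ** b = 0.
  by rewrite Q1 Q2 mA (kp1_orth Hkp) ?mul0x //; apply/eqP.
by rewrite Q2 Z mulx0.
Qed.
End KP.

Theorem lemma4p4 (R : comPzRingType) (k : nat) (G : kgraph k)
    (A : lmodType R) (mul : A -> A -> A) (p : kvert G -> A) (s ss : kpath G -> A) :
  row_finite_no_sources G ->
  KP_universal mul p s ss ->
  forall x y, cycline_subalg mul s ss x -> cycline_subalg mul s ss y ->
    mul x y = mul y x.
Proof.
move=> Hrf [Halg [Hkp _]] x y Hx Hy.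
have gc : forall g h,
    (exists al be, cycline_pair mul s ss al be /\ g = mul (s al) (ss be)) ->
    (exists al be, cycline_pair mul s ss al be /\ h = mul (s al) (ss be)) ->
    mul g h = mul h g.
  move=> g h [al [be [C1 ->]]] [mu [nu [C2 ->]]].
  exact: (gen_comm Halg Hkp Hrf C1 C2).
have St1 : forall g,
    (exists al be, cycline_pair mul s ss al be /\ g = mul (s al) (ss be)) ->
    forall y, cycline_subalg mul s ss y -> mul g y = mul y g.
  move=> g Hg y0 Hy0; apply: (Hy0 (fun y => mul g y = mul y g)).
  - by move=> z Hz; apply: gc.
  - by rewrite (mulx0 Halg) (mul0x Halg).
  - by move=> y1 z1 H1 H2; rewrite (nua_mulDr Halg) (nua_mulDl Halg) H1 H2.
  - by move=> c y1 H1; rewrite (nua_scaler Halg) (nua_scalel Halg) H1.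
  - by move=> y1 z1 H1 H2; rewrite (mA Halg) H1 -(mA Halg) H2 (mA Halg).
apply: (Hx (fun x => mul x y = mul y x)).
- by move=> z Hz; apply: St1.
- by rewrite (mulx0 Halg) (mul0x Halg).
- by move=> y1 z1 H1 H2; rewrite (nua_mulDr Halg) (nua_mulDl Halg) H1 H2.
- by move=> c y1 H1; rewrite (nua_scaler Halg) (nua_scalel Halg) H1.
- by move=> y1 z1 H1 H2; rewrite -(mA Halg) H2 (mA Halg) H1 (mA Halg).
Qed.
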